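(* Let $p=(p_1,p_2,\dots)$ be a probability distribution on $\mathbb{N}$ (possibly of finite support) with $p_1\ge p_2\ge\cdots$ and $p_1\le\frac23$. Let $\pi:\mathbb{N}\times\mathbb{N}\to\mathbb{N}$ be any bijection, and let $\pi p$ denote the probability distribution on $\mathbb{N}\times\mathbb{N}$ given by $(\pi p)(j,k)=p_{\pi(j,k)}$. Then the variation distance between $\pi p$ and $p\otimes p$ (where $(p\otimes p)(j,k)=p_jp_k$) is at least $\frac29$.
   Context: The variation distance between distributions $p,q$ on a countable set is $\frac12\sum_x|p(x)-q(x)|$. *)

(* Defs.v *)
From mathcomp Require Import all_boot all_order all_algebra.
From mathcomp Require Import all_classical all_reals all_analysis.
Set Implicit Arguments. Unset Strict Implicit. Unset Printing Implicit Defensive.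
Import Order.TTheory GRing.Theory Num.Theory.
Local Open Scope classical_set_scope.
Local Open Scope ring_scope.

Definition vardist (R : realType) (T : choiceType) (p q : T -> R) : \bar R :=
  ((2^-1)%:E * \esum_(x in [set: T]) (`|p x - q x|)%:E)%E.

(* Main.v *)
Require Import Defs.
From mathcomp Require Import all_boot all_order all_algebra.
From mathcomp Require Import all_classical all_reals all_analysis.
From mathcomp Require Import ring lra zify.
Import Order.TTheory GRing.Theory Num.Theory.
Local Open Scope classical_set_scope.
Local Open Scope ring_scope.

Section Aux.
Variable R : realType.

Lemma sum_filter_sub (T : eqType) (A F : seq T) (h : T -> R) :
  uniq A -> uniq F -> {subset A <= F} ->
  \sum_(x <- F | x \in A) h x = \sum_(x <- A) h x.
Proof.
move=> uA uF sAF; rewrite -big_filter; apply: perm_big.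
apply: uniq_perm; first exact: filter_uniq.
  done.
move=> x; rewrite mem_filter; case xA: (x \in A) => //=; exact: sAF.
Qed.

Lemma sum_sub_le (T : eqType) (A F : seq T) (h : T -> R) :
  uniq A -> uniq F -> {subset A <= F} -> (forall x, 0 <= h x) ->
  \sum_(x <- A) h x <= \sum_(x <- F) h x.
Proof.
move=> uA uF sAF h0; rewrite [leRHS](bigID (fun x => x \in A)) /= sum_filter_sub //.
by rewrite lerDl sumr_ge0.
Qed.

Lemma seq_le_esum (T : choiceType) (f : T -> R) (s : seq T) :
  uniq s -> (forall x, 0 <= f x) ->
  ((\sum_(x <- s) f x)%:E <= \esum_(x in [set: T]) (f x)%:E)%E.
Proof.
move=> us f0; apply: esum_ge; exists [set` s].
  by split; [exact: finite_seq | by []].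
by rewrite -fsbig_seq // sumEFin.
Qed.

End Aux.

Theorem lemma3p2 (R : realType) (p : nat -> R) (pi : nat * nat -> nat)
  (p_ge0 : forall n, 0 <= p n)
  (p_sum1 : \esum_(n in [set: nat]) (p n)%:E = 1%:E)
  (p_noninc : forall n, p n.+1 <= p n)
  (p0_le : p 0%N <= 2 / 3)
  (pi_bij : bijective pi) :
  ((2 / 9 : R)%:E <= vardist (fun x : nat * nat => p (pi x))
                        (fun x : nat * nat => (p x.1 * p x.2)%R))%E.
Proof.
pose P N := \sum_(i <- iota 0 N) p i.
have P_ge0 N : 0 <= P N by apply: sumr_ge0.
have PS N : P N.+1 = P N + p N.
  by rewrite /P -addn1 iotaD big_cat /= big_seq1.
have pmono n k : (n <= k)%N -> p k <= p n.
  elim: k => [|k IH]; first by rewrite leqn0 => /eqP ->.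
  rewrite leq_eqVlt => /orP[/eqP <- //|]; rewrite ltnS => /IH.
  exact: le_trans (p_noninc k).
have H1 (s : seq nat) : uniq s -> \sum_(n <- s) p n <= 1.
  move=> us; rewrite -lee_fin -p_sum1; exact: seq_le_esum.
have H2 e : 0 < e -> exists N, 1 - e < P N.
  move=> e0.
  have : ((1 - e)%:E < \esum_(n in [set: nat]) (p n)%:E)%E.
    by rewrite p_sum1 lte_fin; lra.
  rewrite /esum => /ereal_sup_gt [_ [X [finX _] <-]].
  rewrite fsbig_finite // sumEFin lte_fin.
  set s := finmap.enum_fset _ => Hs.
  exists (\max_(k <- s) k).+1; apply: (lt_le_trans Hs).
  apply: sum_sub_le => //; first exact: finmap.fset_uniq.
    exact: iota_uniq.
  move=> k ks; rewrite mem_iota add0n ltnS /=.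
  by rewrite (@leq_bigmax_seq _ _ xpredT id k ks).
have sorted_le m (s : seq nat) : uniq s -> (size s <= m)%N -> \sum_(i <- s) p i <= P m.
  elim: m s => [|m IH] s us.
    by rewrite leqn0 => /nilP ->; rewrite big_nil.
  move=> sz; rewrite PS.
  case: (boolP (has (fun x => m <= x)%N s)) => [/hasP [x xs mx]|/hasPn hs].
    rewrite (perm_big _ (perm_to_rem xs)) big_cons addrC lerD //.
      exact: pmono.
    apply: IH; first exact: rem_uniq.
    by rewrite size_rem //; move: sz; case: (size s).
  apply: (@le_trans _ _ (P m)); last by rewrite lerDl.
  apply: sum_sub_le => //; first exact: iota_uniq.
  move=> x xs; rewrite mem_iota add0n /=; have := hs x xs; rewrite -ltnNge //.
pose Q : pred nat := fun n => 3^-1 <= P n.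
have exQ : exists n, Q n.
  have [N HN] := H2 (2/3) ltac:(lra).
  by exists N; rewrite /Q; lra.
case: (ex_minnP exQ) => m Qm mmin.
have P0 : P 0%N = 0 by rewrite /P big_nil.
have [k mk] : exists k, m = k.+1.
  case: m Qm {mmin} => [|k _]; last by exists k.
  by rewrite /Q P0; lra.
have Pk : P k < 3^-1.
  rewrite ltNge; apply/negP => Hk.
  by have := mmin k Hk; rewrite mk ltnn.
set t := P m.
have t_lo : 3^-1 <= t by [].
have t_hi : t <= 2/3.
  rewrite /t mk PS.
  case: k Pk {mk} => [|k] Pk; first by rewrite P0 add0r.
  have p0P : p 0%N <= P k.+1.
    have -> : p 0%N = \sum_(i <- [:: 0%N]) p i by rewrite big_seq1.
    apply: sum_sub_le => //.
      exact: iota_uniq.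
    by move=> x; rewrite inE => /eqP ->; rewrite mem_iota.
  have := pmono 0%N k.+1 isT; lra.
have t2 : 4/9 <= 2 * (t - t * t) by nra.
case: pi_bij => g pg gp.
pose A := map g (iota 0 m).
have uA : uniq A by rewrite map_inj_uniq ?iota_uniq //; exact: can_inj gp.
have qA : \sum_(x <- A) p (pi x) = t.
  by rewrite big_map; apply: eq_bigr => i _; rewrite gp.
have prod_sum (J K : seq nat) :
    \sum_(x <- [seq (i, j) | i <- J, j <- K]) p x.1 * p x.2 =
    (\sum_(j <- J) p j) * (\sum_(k <- K) p k).
  rewrite big_allpairs /= mulr_suml; apply: eq_bigr => j _; by rewrite mulr_sumr.
have pair_inj (J K : seq nat) : {in [seq (x, y) | x <- J, y <- K] &,
    injective (uncurry (@pair nat nat))}.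
  by move=> [a b] [c d] _ _.
have rA : \sum_(x <- A) p x.1 * p x.2 <= t * t.
  pose J := undup (map fst A); pose K := undup (map snd A).
  apply: (@le_trans _ _ (\sum_(x <- [seq (i, j) | i <- J, j <- K]) p x.1 * p x.2)).
    apply: sum_sub_le => //.
    - by apply: allpairs_uniq; rewrite ?undup_uniq.
    - move=> [a b] xA; apply: allpairs_f; rewrite mem_undup.
        exact: (map_f fst xA).
      exact: (map_f snd xA).
    - by move=> x; apply: mulr_ge0.
  have szA : size A = m by rewrite size_map size_iota.
  rewrite prod_sum; apply: ler_pM; try by apply: sumr_ge0.
    apply: sorted_le; first exact: undup_uniq.
    by rewrite -szA -(size_map fst A) size_undup.
  apply: sorted_le; first exact: undup_uniq.
  by rewrite -szA -(size_map snd A) size_undup.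
set q := fun x : nat * nat => p (pi x).
set r := fun x : nat * nat => p x.1 * p x.2.
set E := \esum_(x in [set: nat * nat]) (`|q x - r x|)%:E.
have key e : 0 < e -> ((4/9 - 2 * e)%:E <= E)%E.
  move=> e0; have [N HN] := H2 e e0.
  pose B := \max_(x <- A) maxn x.1 x.2.
  pose N' := maxn N B.+1.
  pose S := iota 0 N'.
  pose F := [seq (i, j) | i <- S, j <- S].
  have uF : uniq F by apply: allpairs_uniq; rewrite ?iota_uniq.
  have AF : {subset A <= F}.
    move=> [a b] xA; have := @leq_bigmax_seq _ A xpredT (fun x => maxn x.1 x.2) _ xA isT.
    rewrite -/B /= => hB.
    by apply: allpairs_f; rewrite mem_iota add0n /N'; lia.
  have rF : \sum_(x <- F) r x = P N' * P N' by rewrite prod_sum.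
  have PNN : P N <= P N'.
    apply: sum_sub_le => //; try exact: iota_uniq.
    move=> x; rewrite !mem_iota /N'; lia.
  have PN1 : P N' <= 1 by apply: H1; exact: iota_uniq.
  have qF : \sum_(x <- F) q x <= 1.
    have := H1 (map pi F); rewrite big_map; apply.
    by rewrite map_inj_uniq //; exact: can_inj pg.
  have split1 : \sum_(x <- F) (r x - q x) =
      \sum_(x <- A) (r x - q x) + \sum_(x <- F | x \notin A) (r x - q x).
    by rewrite (bigID (fun x => x \in A)) /= sum_filter_sub.
  have low : \sum_(x <- A) (q x - r x) + \sum_(x <- F | x \notin A) (r x - q x)
      <= \sum_(x <- F) `|q x - r x|.
    rewrite [leRHS](bigID (fun x => x \in A)) /= sum_filter_sub //.
    apply: lerD; apply: ler_sum => x _; first exact: ler_norm.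
    by rewrite distrC; exact: ler_norm.
  have Hsum : 4/9 - 2 * e <= \sum_(x <- F) `|q x - r x|.
    move: split1 low; rewrite !sumrB rF qA => split1 low.
    have : \sum_(x <- A) r x <= t * t by exact: rA.
    have : 0 <= P N by [].
    nra.
  have := @seq_le_esum R _ (fun x => `|q x - r x|) F uF (fun x => normr_ge0 _).
  by apply: le_trans; rewrite lee_fin.
rewrite /vardist -/E.
have HE : ((4/9)%:E <= E)%E.
  apply/lee_addgt0Pr => e e0.
  have := key (e / 2) ltac:(lra).
  have -> : 4/9 - 2 * (e / 2) = 4/9 - e by field.
  move=> h; rewrite (_ : 4/9 = (4/9 - e) + e); last by ring.
  by rewrite EFinD; apply: leeD2r.
rewrite (_ : 2/9 = 2^-1 * (4/9)); last by field.
by rewrite EFinM; apply: lee_wpmul2l.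
Qed.
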